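(* Let $m\ge2$ and let $K_m$ have Laplacian $L$. Let $\{a_1,b_1\},\dots,\{a_r,b_r\}$ be pairwise vertex-disjoint edges of $K_m$, and let $\tilde L=L-\tfrac34\sum_{j=1}^r(\mathbf e_{a_j}-\mathbf e_{b_j})(\mathbf e_{a_j}-\mathbf e_{b_j})^T$ be the Laplacian of the weighted graph obtained from $K_m$ by setting the weight of each of these edges to $\tfrac14$. Then $\tilde L$ exhibits perfect state transfer at time $2\pi$ between $a_j$ and $b_j$ for every $j=1,\dots,r$.
   Context: $L=D-A$ is the Laplacian; $\mathbf e_u$ is the standard basis vector of vertex $u$. For a real symmetric $H$, $U_H(t)=\exp(-itH)$, and $H$ exhibits perfect state transfer between distinct $u,v$ at time $\tau$ if $U_H(\tau)\mathbf e_u=\gamma\mathbf e_v$ for some $\gamma\in\mathbb C$. *)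

(* Defs.v *)
From HB Require Import structures.
From mathcomp Require Import all_boot all_order all_algebra.
From mathcomp Require Import all_classical all_reals all_analysis.
From mathcomp Require Import complex.

Set Implicit Arguments.
Unset Strict Implicit.
Unset Printing Implicit Defensive.

Import Order.TTheory GRing.Theory Num.Theory.
Import numFieldNormedType.Exports.
Local Open Scope ring_scope.
Local Open Scope complex_scope.

Definition evec (K : nzRingType) (n : nat) (u : 'I_n) : 'cV[K]_n :=
  delta_mx u ord0.

Definition adj_complete (R : nzRingType) (m : nat) : 'M[R]_m :=
  \matrix_(i, j) (i != j)%:R.

Definition laplacian (R : nzRingType) (m : nat) (A : 'M[R]_m) : 'M[R]_m :=
  \matrix_(i, j) ((i == j)%:R * (\sum_k A i k)) - A.

Definition cmx (R : rcfType) (n : nat) (H : 'M[R]_n) : 'M[R[i]]_n :=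
  map_mx (fun x => x%:C) H.

(* U_H(t) = exp(-i t H), defined by its (everywhere convergent) power series
   sum_k (-i t)^k / k! * H^k in the normed space of complex n x n matrices. *)
Definition U_H (R : realType) (n : nat) (H : 'M[R]_n) (t : R) : 'M[R[i]]_n :=
  limn (fun N : nat =>
    \sum_(0 <= k < N) ((((- 'i) * t%:C) ^+ k / (k`!)%:R) *: (cmx H) ^+ k)).

Definition PST (R : realType) (n : nat) (H : 'M[R]_n) (u v : 'I_n) (tau : R) : Prop :=
  u != v /\ exists gamma : R[i], U_H H tau *m evec _ u = gamma *: evec _ v.

(* Main.v *)
Require Import Defs.
From HB Require Import structures.
From mathcomp Require Import all_boot all_order all_algebra.
From mathcomp Require Import all_classical all_reals all_analysis.
From mathcomp Require Import complex.
From mathcomp Require Import ring.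

Import Order.TTheory GRing.Theory Num.Theory.
Local Open Scope ring_scope.
Import numFieldTopology.Exports numFieldNormedType.Exports.
Set Implicit Arguments.
Unset Strict Implicit.

Lemma laplacian_complete (F : nzRingType) (m : nat) :
  laplacian (adj_complete F m) = (m%:R)%:M - const_mx 1.
Proof.
apply/matrixP => i j; rewrite !mxE.
have -> : \sum_k (adj_complete F m) i k = (m.-1)%:R.
  rewrite (bigD1 i) //= !mxE eqxx /= add0r.
  rewrite (eq_bigr (fun _ => 1)); last by move=> k /negbTE; rewrite !mxE eq_sym => ->.
  rewrite sumr_const cardC1 card_ord //.
case: (i == j) => /=.
  rewrite mul1r mulr1n subr0 -(natrB _ (_ : 1 <= m)%N); last by case: m i {j} => [[]|].
  by rewrite subn1.
by rewrite mul0r mulr0n sub0r.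
Qed.

Section Alg.
Variable (F : numFieldType) (m r : nat) (a b : 'I_r -> 'I_m).
Hypothesis hedge : forall j, a j != b j.
Hypothesis hdisj : forall j k, j != k ->
       [/\ a j != a k, a j != b k, b j != a k & b j != b k].

Definition J : 'M[F]_m := const_mx 1.
Definition dv j : 'cV[F]_m := evec F (a j) - evec F (b j).
Definition Qm : 'M[F]_m := \sum_(j < r) (dv j *m (dv j)^T).

Lemma ee (u v : 'I_m) : (evec F u)^T *m evec F v = (u == v)%:R%:M.
Proof.
rewrite /evec trmx_delta mul_delta_mx_cond.
apply/matrixP => i j; rewrite !ord1; case: (u == v); rewrite ?mulr1n ?mulr0n !mxE ?eqxx //.
Qed.

Lemma dd (j k : 'I_r) : (dv j)^T *m dv k = ((j == k)%:R *+ 2)%:M.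
Proof.
rewrite /dv !raddfB /= !mulmxBl !ee.
case: (eqVneq j k) => [<-|njk].
  rewrite !eqxx (negbTE (hedge j)) eq_sym (negbTE (hedge j)).
  apply/matrixP => x y; rewrite !ord1 !mxE /= !mulr1n.
  by rewrite subr0 sub0r opprK.
have [h1 h2 h3 h4] := hdisj njk.
rewrite (negbTE h1) (negbTE h2) (negbTE h3) (negbTE h4) /=.
apply/matrixP => x y; rewrite !ord1 !mxE /= !mulr0n.
by rewrite !mul0rn !subrr.
Qed.

Lemma Jevec (u : 'I_m) : J *m evec F u = const_mx 1.
Proof. by rewrite /evec -colE; apply/matrixP => x y; rewrite !mxE. Qed.

Lemma Jd j : J *m dv j = 0.
Proof. by rewrite /dv mulmxBr !Jevec subrr. Qed.

Lemma dJ j : (dv j)^T *m J = 0.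
Proof. by rewrite -[J]trmx_const -trmx_mul Jd trmx0. Qed.

Lemma JJ : J *m J = m%:R *: J.
Proof.
apply/matrixP => x y; rewrite !mxE (eq_bigr (fun _ => 1)); last by move=> k _; rewrite !mxE mulr1.
by rewrite sumr_const card_ord mulr1.
Qed.

Lemma JQ : J *m Qm = 0.
Proof. by rewrite /Qm mulmx_sumr big1 // => k _; rewrite mulmxA Jd mul0mx. Qed.

Lemma QJ : Qm *m J = 0.
Proof. by rewrite /Qm mulmx_suml big1 // => k _; rewrite -mulmxA dJ mulmx0. Qed.

Lemma QQ : Qm *m Qm = 2%:R *: Qm.
Proof.
rewrite {1}/Qm mulmx_suml /Qm scaler_sumr; apply: eq_bigr => j _.
rewrite mulmx_sumr (bigD1 j) //= big1 ?addr0; last first.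
  move=> k /negbTE njk; rewrite -mulmxA (mulmxA _ (dv k)) dd eq_sym njk mul0rn.
  by rewrite mul_scalar_mx scale0r mulmx0.
by rewrite !mulmxA -(mulmxA (dv j) _ (dv j)) dd eqxx mul_mx_scalar -scalemxAl.
Qed.

Lemma de k (u : 'I_m) : (dv k)^T *m evec F u = ((a k == u)%:R - (b k == u)%:R)%:M.
Proof. by rewrite /dv [(_ - _)^T]raddfB mulmxBl !ee raddfB. Qed.

Lemma Qea j : Qm *m evec F (a j) = dv j.
Proof.
rewrite /Qm mulmx_suml (bigD1 j) //= big1 ?addr0; last first.
  move=> k njk; have [h1 h2 h3 h4] := hdisj njk.
  by rewrite -mulmxA de (negbTE h1) (negbTE h3) subrr mul_mx_scalar scale0r.
by rewrite -mulmxA de eqxx eq_sym (negbTE (hedge j)) subr0 mulmx1.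
Qed.

Hypothesis m0 : (m%:R : F) != 0.
Hypothesis two0 : (2 : F) != 0.
Definition E0 : 'M[F]_m := (m%:R)^-1 *: J.
Definition E1 : 'M[F]_m := 2^-1 *: Qm.

Lemma E00 : E0 *m E0 = E0.
Proof. rewrite /E0 -scalemxAl -scalemxAr JJ !scalerA; congr (_ *: _). by rewrite divfK. Qed.
Lemma E11 : E1 *m E1 = E1.
Proof.
rewrite /E1 -scalemxAl -scalemxAr QQ !scalerA; congr (_ *: _).
by rewrite divfK. Qed.
Lemma E01 : E0 *m E1 = 0.
Proof. by rewrite /E0 /E1 -scalemxAl -scalemxAr JQ !scaler0. Qed.
Lemma E10 : E1 *m E0 = 0.
Proof. by rewrite /E0 /E1 -scalemxAl -scalemxAr QJ !scaler0. Qed.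

Lemma Mdecomp : (m%:R)%:M - J - (3 / 4) *: Qm =
  0 *: E0 + (m%:R - 3 / 2) *: E1 + m%:R *: (1%:M - E0 - E1).
Proof.
rewrite /E0 /E1 /J; apply/matrixP => i k; rewrite !mxE.
rewrite -mulr_natr. by field.
Qed.
End Alg.

Section Spec.
Variable (F : fieldType) (n : nat).
Lemma pow3 (P Q : 'M[F]_n) (x y z : F) k :
  P *m P = P -> Q *m Q = Q -> P *m Q = 0 -> Q *m P = 0 ->
  (x *: P + y *: Q + z *: (1%:M - P - Q)) ^+ k =
  x ^+ k *: P + y ^+ k *: Q + z ^+ k *: (1%:M - P - Q).
Proof.
move=> PP QQ PQ QP.
set S := 1%:M - P - Q.
have PS : P *m S = 0 by rewrite /S !mulmxBr mulmx1 PP PQ subrr subr0.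
have SP : S *m P = 0 by rewrite /S !mulmxBl mul1mx PP QP subrr subr0.
have QS : Q *m S = 0 by rewrite /S !mulmxBr mulmx1 QQ QP subr0 subrr.
have SQ : S *m Q = 0 by rewrite /S !mulmxBl mul1mx QQ PQ subr0 subrr.
have SS : S *m S = S by rewrite {1}/S !mulmxBl mul1mx PS QS !subr0.
elim: k => [|k IH].
  by rewrite !expr0 !scale1r /S -[1%:M - P - Q]addrA -opprD addrC addNKr.
rewrite exprSr IH -mulmxE.
rewrite !mulmxDl !mulmxDr -!scalemxAl -!scalemxAr !scalerA.
rewrite PP QQ PQ QP PS SP QS SQ SS !scaler0 !addr0 !add0r -!exprSr.
done.
Qed.
End Spec.


Section An.
Local Open Scope complex_scope.
Local Open Scope classical_set_scope.
Variable R : realType.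
Local Notation C := (Num.NumField.sort (R[i] : numFieldType)).

Lemma ipow_aux (b : bool) (q : nat) :
  (- 'i) ^+ (b + q.*2) =
  ((~~ odd (b + q.*2))%:R * (-1) ^+ (b + q.*2)./2 : R)%:C
  - 'i * ((odd (b + q.*2))%:R * (-1) ^+ (b + q.*2).-1./2 : R)%:C :> R[i].
Proof.
rewrite half_bit_double oddD odd_double oddb addbF exprD -mul2n exprM sqrrN sqr_i.
case: b => /=.
  by rewrite add0n mul2n doubleK mul0r mul1r rmorph0 sub0r expr1 rmorphXn rmorphN rmorph1 mulNr.
by rewrite expr0 mul1r mul0r mul1r rmorph0 mulr0 subr0 rmorphXn rmorphN rmorph1.
Qed.


Lemma coefE (y : R) k : (- 'i) ^+ k * (y%:C) ^+ k / (k`!)%:R =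
  (cos_coeff y k)%:C - 'i * (sin_coeff y k)%:C :> R[i].
Proof.
have := ipow_aux (odd k) k./2; rewrite odd_double_half => ->.
rewrite /cos_coeff /sin_coeff /=.
rewrite !(rmorphM, fmorphV, rmorphXn, rmorph_nat) /=.
ring.
Qed.

Lemma cvgC (u : nat -> R) (l : R) : u @ \oo --> l ->
  (fun n => (u n)%:C : C) @ \oo --> (l%:C : C).
Proof.
move=> /cvgrPdist_lt H; apply/cvgrPdist_lt => e e0.
move: (e0); rewrite ltcE /= => /andP[/eqP Ie Re0].
apply: filterS (H _ Re0) => n hn.
rewrite -rmorphB normc_def /= expr0n /= addr0 sqrtr_sqr ltcE /= -Ie eqxx /=.
exact: hn.
Qed.

Lemma cvg_cos (y : R) : series (cos_coeff y) @ \oo --> cos y.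
Proof. rewrite cos.unlock; exact: is_cvg_series_cos_coeff. Qed.
Lemma cvg_sin (y : R) : series (sin_coeff y) @ \oo --> sin y.
Proof. rewrite sin.unlock; exact: is_cvg_series_sin_coeff. Qed.

Lemma cvg_expi (y : R) :
  (fun N => \sum_(0 <= k < N) ((- 'i) ^+ k * (y%:C) ^+ k / (k`!)%:R)) @ \oo -->
  ((cos y)%:C - 'i * (sin y)%:C : C).
Proof.
have -> : (fun N => \sum_(0 <= k < N) ((- 'i) ^+ k * (y%:C) ^+ k / (k`!)%:R)) =
  (fun N => (series (cos_coeff y) N)%:C - 'i * (series (sin_coeff y) N)%:C).
  apply/funext => N; rewrite /series /= !rmorph_sum /= mulr_sumr -sumrB.
  by apply: eq_bigr => k _; rewrite coefE.
have h1 := cvgC (@cvg_cos y).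
have h2 := cvgMl_tmp (a := 'i) (cvgC (@cvg_sin y)).
have h3 := cvgB h1 (h2 _).
exact: h3.
Qed.
End An.

Lemma trig_nat (R : realType) (n : nat) :
  cos (2 * pi * n%:R) = 1 :> R /\ sin (2 * pi * n%:R) = 0 :> R.
Proof.
elim: n => [|n [hc hs]]; first by rewrite mulr0 cos0 sin0.
have -> : 2 * pi * n.+1%:R = 2 * pi * n%:R + pi *+ 2 :> R.
  by rewrite -[n.+1%:R]natr1 -mulr_natl; ring.
by rewrite cosD2pi sinD2pi.
Qed.

Unset Implicit Arguments.
Set Strict Implicit.

Theorem mainTheorem7 (R : realType) (m : nat) (hm : (2 <= m)%N)
    (r : nat) (a b : 'I_r -> 'I_m)
    (hedge : forall j, a j != b j)
    (hdisj : forall j k, j != k ->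
       [/\ a j != a k, a j != b k, b j != a k & b j != b k]) :
  let L : 'M[R]_m := laplacian (adj_complete R m) in
  let Lt : 'M[R]_m :=
    L - (3 / 4) *: \sum_(j < r)
          ((evec R (a j) - evec R (b j)) *m (evec R (a j) - evec R (b j))^T) in
  forall j : 'I_r, PST Lt (a j) (b j) (2 * pi).
Proof.
move=> L Lt j; split; first exact: hedge.
exists 1.
have hm0 : (m%:R : R[i]) != 0 by rewrite pnatr_eq0 -lt0n; apply: (leq_trans _ hm).
have h20 : (2 : R[i]) != 0 by rewrite pnatr_eq0.
have eqM : cmx Lt = (m%:R)%:M - J R[i] m - (3 / 4) *: Qm R[i] a b.
  rewrite /cmx /Lt /L laplacian_complete.
  change (map_mx (real_complex R) ((m%:R)%:M - const_mx 1 - (3 / 4) *: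
     \sum_(j0 < r) ((evec R (a j0) - evec R (b j0)) *m (evec R (a j0) - evec R (b j0))^T))
    = (m%:R)%:M - J R[i] m - (3 / 4) *: Qm R[i] a b).
  have c1 : map_mx (real_complex R) (const_mx 1 : 'M[R]_m) = J R[i] m.
    by rewrite map_const_mx rmorph1.
  have c2 : map_mx (real_complex R) ((m%:R : R)%:M : 'M[R]_m) = (m%:R)%:M.
    by rewrite map_scalar_mx rmorph_nat.
  have c3 : map_mx (real_complex R) (\sum_(j0 < r) ((evec R (a j0) - evec R (b j0))
     *m (evec R (a j0) - evec R (b j0))^T)) = Qm R[i] a b.
    rewrite map_mx_sum; apply: eq_bigr => k _.
    by rewrite map_mxM -map_trmx /dv map_mxB /evec !map_delta_mx.
  have c4 : real_complex R (3 / 4) = 3 / 4 by rewrite fmorph_div !rmorph_nat.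
  rewrite !map_mxB c1 c2 map_mxZ c3; congr (_ - _ *: _); exact: c4.
set E0c := E0 R[i] m. set E1c := E1 R[i] a b.
have eqM2 : cmx Lt = (0 : R)%:C%C *: E0c + (m%:R - 3 / 2 : R)%:C%C *: E1c
    + (m%:R : R)%:C%C *: (1%:M - E0c - E1c).
  rewrite eqM Mdecomp // rmorph0 rmorphB fmorph_div !rmorph_nat //.
have pw k : (cmx Lt) ^+ k = ((0 : R)%:C%C) ^+ k *: E0c + ((m%:R - 3 / 2 : R)%:C%C) ^+ k *: E1c
    + ((m%:R : R)%:C%C) ^+ k *: (1%:M - E0c - E1c).
  rewrite eqM2; apply: pow3.
  - exact: E00.
  - exact: E11.
  - exact: E01.
  - exact: E10.
have coefM (x : R) k : ((- 'i%C * (2 * pi)%:C%C) ^+ k / (k`!)%:R) * (x%:C%C) ^+ k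
    = (- 'i%C) ^+ k * (((2 * pi) * x)%:C%C) ^+ k / (k`!)%:R.
  rewrite !rmorphM !exprMn. ring.
pose S (y : R) N := \sum_(0 <= k < N) ((- 'i%C) ^+ k * (y%:C%C) ^+ k / (k`!)%:R).
rewrite /U_H; set f := (X in lim (X @ \oo)%classic).
have -> : f = (fun N => S (2 * pi * 0) N *: E0c + S (2 * pi * (m%:R - 3 / 2)) N *: E1c
    + S (2 * pi * m%:R) N *: (1%:M - E0c - E1c)).
  apply/funext => N; rewrite /f /S !scaler_suml -!big_split /=; apply: eq_bigr => k _.
  by rewrite pw !scalerDr !scalerA !coefM.
have h0 := cvgZr_tmp (a := E0c) (@cvg_expi R (2 * pi * 0)).
have h1 := cvgZr_tmp (a := E1c) (@cvg_expi R (2 * pi * (m%:R - 3 / 2))).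
have h2 := cvgZr_tmp (a := 1%:M - E0c - E1c) (@cvg_expi R (2 * pi * m%:R)).
have FF : Filter (\oo%classic : set_system nat) by exact: _.
have hl := cvgD (cvgD (h0 FF) (h1 FF)) (h2 FF).
rewrite (cvg_lim (@norm_hausdorff _ _) (hl FF FF)).
have [c2 s2] := trig_nat R m.
have [c1 s1] : cos (2 * pi * (m%:R - 3 / 2)) = -1 :> R /\ sin (2 * pi * (m%:R - 3 / 2)) = 0 :> R.
  have [c s] := trig_nat R (m - 2).
  have -> : 2 * pi * (m%:R - 3 / 2) = 2 * pi * (m - 2)%:R + pi :> R.
    by rewrite natrB //; field.
  by rewrite cosDpi sinDpi c s oppr0.
rewrite mulr0 cos0 sin0 c1 s1 c2 s2 !rmorph0 !mulr0 !subr0 rmorphN rmorph1 !scale1r scaleN1r.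
have -> : E0c - E1c + (1%:M - E0c - E1c) = 1%:M - Qm R[i] a b.
  rewrite /E1c /E1; apply/matrixP => x y; rewrite !mxE; field; exact: hm0.
by rewrite mulmxBl mul1mx Qea // /dv opprB addrC subrK.
Qed.
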